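(* Generalized PAV does not satisfy EJR-M: there exists an instance and an allocation selected by Generalized PAV that violates EJR-M.
   Context: Model: There is a set of agents $N=\{1,\dots,n\}$. The resource $R$ consists of a cake $C=[0,c]$ for a real $c\ge 0$ and a set of indivisible goods $G=\{g_1,\dots,g_m\}$ for an integer $m\ge 0$, with $\max(c,m)>0$. A piece of cake is a union of finitely many disjoint closed subintervals of $C$; its length $\ell(\cdot)$ is the sum of the lengths of its intervals. A bundle $R'=(C',G')$ consists of a piece of cake $C'\subseteq C$ and a set $G'\subseteq G$; its size is $s(R')=\ell(C')+|G'|$. Each agent $i$ approves a bundle $R_i=(C_i,G_i)$, and her utility for a bundle $R'$ is $u_i(R')=\ell(C_i\cap C')+|G_i\cap G'|$. A parameter $\alpha\in(0,c+m]$ is given; an allocation is a bundle $A$ with $s(A)\le\alpha$. For a real $t>0$, $N^*\subseteq N$ is $t$-cohesive if $|N^*|\ge t n/\alpha$ and $s(\bigcap_{i\in N^*}R_i)\ge t$. EJR-M: an allocation $A$ satisfies EJR-M if for every real $t>0$ and every $t$-cohesive group $N^*$ for which there exists a bundle $R^*\subseteq R$ with $s(R^* )=t$ and $R^*\subseteq R_i$ for all $i\in N^*$, there is $j\in N^*$ with $u_j(A)\ge t$. Generalized harmonic numbers: $H_x\coloneqq\sum_{k=1}^\infty\frac{x}{k(x+k)}$ for real $x\ge0$. Generalized PAV selects an allocation $R'$ with $s(R')\le\alpha$ maximizing $\sum_{i\in N}H_{u_i(R')}$. *)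

(* Defs.v *)
From HB Require Import structures.
From mathcomp Require Import all_boot all_order all_algebra.
From mathcomp Require Import all_classical all_reals all_analysis.
Set Implicit Arguments. Unset Strict Implicit. Unset Printing Implicit Defensive.
Import Order.TTheory GRing.Theory Num.Theory.
Local Open Scope classical_set_scope.
Local Open Scope ring_scope.

Section Defs.
Variable R : realType.

Definition is_piece (c : R) (P : set R) : Prop :=
  exists s : seq (R * R),
    (forall p, p \in s -> 0 <= p.1 /\ p.1 <= p.2 /\ p.2 <= c) /\
    (forall i j, (i < j < size s)%N ->
        (nth (0,0) s i).2 < (nth (0,0) s j).1 \/
        (nth (0,0) s j).2 < (nth (0,0) s i).1) /\
    P = \bigcup_(p in [set q | q \in s]) `[p.1, p.2]%classic.

Definition len (P : set R) : R := fine (@lebesgue_measure R P).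

Record bundle (m : nat) := Bundle { bcake : set R ; bgoods : {set 'I_m} }.

Definition is_bundle (c : R) (m : nat) (B : bundle m) : Prop := is_piece c (bcake B).

Definition bsize (m : nat) (B : bundle m) : R := len (bcake B) + (#|bgoods B|)%:R.

Definition bsub (m : nat) (B B' : bundle m) : Prop :=
  bcake B `<=` bcake B' /\ bgoods B \subset bgoods B'.

Definition util (m : nat) (Ri B : bundle m) : R :=
  len (bcake Ri `&` bcake B) + (#|bgoods Ri :&: bgoods B|)%:R.

Definition bigcap_bundle (n m : nat) (Rb : 'I_n -> bundle m) (S : {set 'I_n}) : bundle m :=
  Bundle [set x | forall i, i \in S -> bcake (Rb i) x]
         (\bigcap_(i in S) bgoods (Rb i)).

Definition genH (x : R) : R :=
  limn (fun N : nat => \sum_(1 <= k < N) (x / (k%:R * (x + k%:R)))).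

Definition valid_instance (n : nat) (c : R) (m : nat) (Rb : 'I_n -> bundle m) (alpha : R) : Prop :=
  (0 < n)%N /\ 0 <= c /\ 0 < Num.max c m%:R /\
  (forall i, is_bundle c (Rb i)) /\ 0 < alpha /\ alpha <= c + m%:R.

Definition is_allocation (c : R) (m : nat) (alpha : R) (A : bundle m) : Prop :=
  is_bundle c A /\ bsize A <= alpha.

Definition t_cohesive (n m : nat) (Rb : 'I_n -> bundle m) (alpha t : R) (S : {set 'I_n}) : Prop :=
  t * n%:R / alpha <= (#|S|)%:R /\ t <= bsize (bigcap_bundle Rb S).

Definition EJRM (n : nat) (c : R) (m : nat) (Rb : 'I_n -> bundle m) (alpha : R) (A : bundle m) : Prop :=
  forall (t : R) (S : {set 'I_n}), 0 < t -> t_cohesive Rb alpha t S ->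
    (exists Rs : bundle m, is_bundle c Rs /\ bsize Rs = t /\ forall i, i \in S -> bsub Rs (Rb i)) ->
    exists2 j, j \in S & t <= util (Rb j) A.

Definition PAV_score (n m : nat) (Rb : 'I_n -> bundle m) (A : bundle m) : R :=
  \sum_(i < n) genH (util (Rb i) A).

Definition PAV_selects (n : nat) (c : R) (m : nat) (Rb : 'I_n -> bundle m) (alpha : R) (A : bundle m) : Prop :=
  is_allocation c alpha A /\
  forall B : bundle m, is_allocation c alpha B -> PAV_score Rb B <= PAV_score Rb A.

End Defs.

(* Main.v *)
Require Import Defs.
From mathcomp Require Import all_boot all_order all_algebra.
From mathcomp Require Import all_classical all_reals all_analysis.
From mathcomp Require Import ring lra.
Import Order.TTheory GRing.Theory Num.Theory.
Import numFieldNormedType.Exports.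
Local Open Scope ring_scope.

Section Aux.
Variable R : realType.
Local Open Scope classical_set_scope.

Lemma lem_mono {A B : set R} : A `<=` B -> (lebesgue_measure A <= lebesgue_measure B)%E.
Proof.
move=> AB.
exact: (le_outer_measure ((wlength (@idfun R))^*)%mu A B AB).
Qed.

Lemma lam_itv (a b : R) : a <= b -> lebesgue_measure (`[a, b]%classic : set R) = (b - a)%:E.
Proof.
move=> ab; rewrite lebesgue_measure_itv /=.
case: ltP => h //=.
move: h; rewrite lee_fin => h.
have -> : b = a by apply/eqP; rewrite eq_le ab h.
by rewrite subrr.
Qed.

Lemma len_itv (a b : R) : a <= b -> len (`[a, b]%classic : set R) = b - a.
Proof. by move=> ab; rewrite /len lam_itv. Qed.

Lemma len0 : len (set0 : set R) = 0.
Proof. by rewrite /len measure0. Qed.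

Lemma fin01 (P : set R) : P `<=` `[0, 1]%classic ->
  exists r : R, lebesgue_measure P = r%:E /\ 0 <= r <= 1.
Proof.
move=> sub.
have h0 : (0 <= lebesgue_measure P)%E := measure_ge0 _ _.
have h1 : (lebesgue_measure P <= 1%:E)%E.
  have := lem_mono sub; rewrite lam_itv ?ler01 // subr0 //.
move: h0 h1; case: (lebesgue_measure P) => [r| |] //= h0 h1.
by exists r; split => //; rewrite -!lee_fin h0 h1.
Qed.


Definition hseq (x : R) (N : nat) : R := \sum_(1 <= k < N) (x / (k%:R * (x + k%:R))).

Lemma genHE (x : R) : genH x = limn (hseq x).
Proof. by []. Qed.

Lemma hterm_ge0 (x : R) k : 0 <= x -> 0 <= x / (k%:R * (x + k%:R)).
Proof. move=> x0; apply: divr_ge0 => //; apply: mulr_ge0 => //; apply: addr_ge0 => //. Qed.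

Lemma hseq_step (x : R) N : 0 <= x -> hseq x N <= hseq x N.+1.
Proof.
move=> x0; rewrite /hseq; case: N => [|N].
  by rewrite !big_geq.
rewrite [X in _ <= X]big_nat_recr //= lerDl; exact: hterm_ge0.
Qed.

Lemma hseq_nd {x : R} : 0 <= x -> {homo hseq x : n m / (n <= m)%N >-> n <= m}.
Proof. by move=> x0; apply/nondecreasing_seqP => n; exact: hseq_step. Qed.

Lemma hterm_le {x : R} k : 0 <= x <= 1 -> (0 < k)%N ->
  x / (k%:R * (x + k%:R)) <= k%:R^-1 - (k.+1)%:R^-1.
Proof.
move=> /andP[x0 x1] k0.
have kp : 0 < k%:R :> R by rewrite ltr0n.
have xk : 0 < x + k%:R by apply: ltr_pwDr.
have k1 : 0 < k.+1%:R :> R by rewrite ltr0n.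
rewrite -subr_ge0.
have -> : k%:R^-1 - k.+1%:R^-1 - x / (k%:R * (x + k%:R)) =
   (k%:R * (1 - x)) / (k%:R * k.+1%:R * (x + k%:R)) :> R.
  rewrite -natr1; field.
  by rewrite !lt0r_neq0 // natr1.
apply: divr_ge0.
  by apply: mulr_ge0; [exact: ltW| rewrite subr_ge0].
by apply: mulr_ge0; [apply: mulr_ge0|]; exact: ltW.
Qed.

Lemma hseq_ub {x : R} N : 0 <= x <= 1 -> hseq x N.+1 <= 1 - (N.+1)%:R^-1.
Proof.
move=> hx; elim: N => [|N IH].
  by rewrite /hseq big_geq // invr1 subrr.
rewrite /hseq big_nat_recr //= -/(hseq x N.+1).
apply: le_trans (lerD IH (hterm_le N.+1 hx isT)) _.
by rewrite addrA subrK.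
Qed.

Lemma hseq_le1 {x : R} N : 0 <= x <= 1 -> hseq x N <= 1.
Proof.
move=> hx; case: N => [|N]; first by rewrite /hseq big_geq.
apply: le_trans (hseq_ub N hx) _.
by rewrite lerBlDr lerDl invr_ge0.
Qed.

Lemma hseq_cvg {x : R} : 0 <= x <= 1 -> cvgn (hseq x).
Proof.
move=> hx; have x0 : 0 <= x by case/andP: hx.
apply: nondecreasing_is_cvgn; first exact: hseq_nd.
by exists 1 => _ [N _ <-]; exact: hseq_le1.
Qed.

Lemma genH_le1 (x : R) : 0 <= x <= 1 -> genH x <= 1.
Proof.
move=> hx; rewrite genHE; apply: limr_le; first exact: hseq_cvg.
by apply: nearW => N; exact: hseq_le1.
Qed.

Lemma genH1 : 2^-1 <= genH (1 : R).
Proof.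
have hx : 0 <= (1 : R) <= 1 by rewrite ler01 lexx.
rewrite genHE; apply: le_trans (nondecreasing_cvgn_le (hseq_nd ler01) (hseq_cvg hx) 2).
rewrite /hseq big_nat1 mul1r mulr1n mul1r (_ : 1 + 1 = 2) //.
Qed.

Lemma genH0 : genH (0 : R) = 0.
Proof.
rewrite genHE.
have -> : hseq 0 = fun=> 0.
  by apply: funext => N; rewrite /hseq big1 // => k _; rewrite mul0r.
exact: lim_cst.
Qed.


Lemma piece0 (c : R) : is_piece c set0.
Proof.
exists [::]; split => //; split; first by move=> i j; rewrite /= ltn0 andbF.
by apply/seteqP; split => x // [p]; rewrite /= in_nil.
Qed.

Lemma piece_itv (c a b : R) : 0 <= a -> a <= b -> b <= c -> is_piece c `[a, b]%classic.
Proof.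
move=> a0 ab bc; exists [:: (a, b)]; split.
  by move=> p; rewrite inE => /eqP -> /=.
split; first by move=> i j /andP[ij]; rewrite /= ltnS leqn0 => /eqP j0; move: ij; rewrite j0.
apply/seteqP; split => x.
  by move=> hx; exists (a, b) => //=; rewrite inE.
by case=> p /=; rewrite inE => /eqP ->.
Qed.

Lemma piece_sub (P : set R) : is_piece 1 P -> P `<=` `[0, 1]%classic.
Proof.
case=> s [h1 [_ ->]] x [p /= /h1 [p0 [p12 p2]]].
rewrite /= !in_itv /= => /andP[a b].
by rewrite (le_trans p0 a) (le_trans b p2).
Qed.

End Aux.

Section Main.
Variable R : realType.
Local Open Scope classical_set_scope.

Definition Rb3 (i : 'I_3) : bundle R 1 :=
  if (val i == 2)%N then Bundle `[(0:R), 1] finset.set0 else Bundle set0 [set ord0]%SET.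

Definition A3 : bundle R 1 := Bundle set0 [set ord0]%SET.

Lemma goods_cases (G : {set 'I_1}) : G = finset.set0 \/ G = [set ord0]%SET.
Proof.
case: (boolP (ord0 \in G)) => h; [right|left]; apply/setP => i;
  rewrite (ord1 i) !inE ?eqxx; apply/idP; [exact: h| exact/negP].
Qed.

End Main.

Theorem mainTheorem10 (R : realType) :
  exists (n : nat) (c : R) (m : nat) (Rb : 'I_n -> bundle R m) (alpha : R) (A : bundle R m),
    valid_instance c Rb alpha /\ PAV_selects c Rb alpha A /\ ~ EJRM c Rb alpha A.
Proof.
exists 3%N, 1, 1%N, (@Rb3 R), 1, (@A3 R).
split.
  split => //; split; first exact: ler01.
  split; first by rewrite lt_max ltr01.
  split.
    move=> i; rewrite /is_bundle /Rb3; case: ifP => _ /=.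
      by apply: piece_itv; rewrite ?ler01 ?lexx.
    exact: piece0.
  split; first exact: ltr01.
  by rewrite lerDl ler01.
split.
  split.
    split; first exact: piece0.
    by rewrite /bsize /= len0 cards1 add0r.
  move=> B [pB sB].
  rewrite /PAV_score !big_ord_recl !big_ord0 /util /Rb3 /= !addr0.
  rewrite !set0I setI0 !finset.set0I finset.setIid cards0 cards1 len0 !add0r ?addr0 genH0 ?addr0.
  have h1 := genH1 R.
  case: (goods_cases (bgoods B)) => hG; rewrite hG in sB *.
    rewrite finset.setI0 cards0 genH0 !add0r.
    have [r [hr /andP[r0 r1]]] := @fin01 R _ (@subIsetl _ `[(0:R), 1]%classic (bcake B)).
    have -> : len (`[(0:R), 1]%classic `&` bcake B) = r by rewrite /len hr.
    have hu : genH r <= 1 by apply: genH_le1; rewrite r0 r1.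
    lra.
  rewrite finset.setIid cards1.
  move: sB; rewrite /bsize hG cards1 => sB.
  have [r [hr /andP[r0 r1]]] := @fin01 R _ (piece_sub R _ pB).
  have r00 : r = 0 by move: sB; rewrite /len hr /=; lra.
  have [r' [hr' /andP[r'0 _]]] := @fin01 R _ (@subIsetl _ `[(0:R), 1]%classic (bcake B)).
  have := lem_mono R (@subIsetr _ `[(0:R), 1]%classic (bcake B)).
  rewrite hr hr' r00 lee_fin => h.
  have -> : len (`[(0:R), 1]%classic `&` bcake B) = 0.
    by rewrite /len hr' /=; apply/eqP; rewrite eq_le h r'0.
  by rewrite genH0 addr0.
move=> H.
have t0 : 0 < 1 / 3 :> R by rewrite div1r invr_gt0 ltr0n.
have [] := H (1 / 3) [set ord_max]%SET t0.
- split.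
    by rewrite cards1 divr1 div1r mulVf // pnatr_eq0.
  rewrite /bsize /bigcap_bundle /=.
  have -> : [set x : R | forall i, i \in [set ord_max]%SET -> bcake (Rb3 R i) x]%classic = `[(0:R), 1]%classic.
    apply/seteqP; split => x /=.
      by move=> h; exact: (h ord_max (set11 _)).
    by move=> hx i; rewrite inE => /eqP ->.
  rewrite big_set1 /= cards0 addr0 len_itv ?ler01 // subr0.
  lra.
- exists (Bundle `[(0:R), 1 / 3]%classic finset.set0); split.
    by apply: piece_itv; lra.
  split. rewrite /bsize /= cards0 addr0 len_itv; first by rewrite subr0.
    lra.
  move=> i; rewrite inE => /eqP ->; split => /=; last exact: finset.sub0set.
  move=> x /=; rewrite !in_itv /= => /andP[h1 h2]; apply/andP; split => //.
  lra.
- move=> j; rewrite inE => /eqP ->.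
  rewrite /util /= setI0 len0 finset.set0I cards0 add0r.
  by rewrite leNgt t0.
Qed.
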